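(* Every regular locally almost arcwise connected topological space is locally connected.
   Context: Two sets $A,B$ are joined by an arc in a set $S$ if there is a continuous $\gamma:[0,1]\to X$ with $\gamma([0,1])\subseteq S$, $\gamma(0)\in A$, $\gamma(1)\in B$. $X$ is locally almost arcwise connected at $x$ if for every neighborhood $V$ of $x$ there is a neighborhood $U\subseteq V$ of $x$ such that each pair of nonempty open subsets of $U$ can be joined by an arc in $\overline V$; locally almost arcwise connected means this holds at every point. *)

(* Defs.v *)
From Stdlib Require Import Reals.
Open Scope R_scope.

Set Implicit Arguments.

Record topology (X : Type) := Topology {
  open : (X -> Prop) -> Prop;
  open_full : open (fun _ => True);
  open_inter : forall A B, open A -> open B -> open (fun x => A x /\ B x);
  open_union : forall F : (X -> Prop) -> Prop,
      (forall A, F A -> open A) -> open (fun x => exists A, F A /\ A x)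
}.

Section Topo.
Variables (X : Type) (T : topology X).

Definition closed (F : X -> Prop) : Prop := open T (fun x => ~ F x).

Definition nbhd (x : X) (N : X -> Prop) : Prop :=
  exists O, open T O /\ O x /\ (forall y, O y -> N y).

Definition closure (S : X -> Prop) : X -> Prop :=
  fun y => forall O, open T O -> O y -> exists z, O z /\ S z.

Definition subset (A B : X -> Prop) : Prop := forall x, A x -> B x.

(* Regular: points and closed sets not containing them are separated by
   disjoint open sets (no T1 assumption). *)
Definition regular : Prop :=
  forall (x : X) (F : X -> Prop), closed F -> ~ F x ->
    exists U V, open T U /\ open T V /\ U x /\ subset F V /\
      (forall y, U y -> V y -> False).

Definition connected (S : X -> Prop) : Prop :=
  forall A B, open T A -> open T B -> subset S (fun x => A x \/ B x) ->
    (exists x, S x /\ A x) -> (exists x, S x /\ B x) ->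
    exists x, S x /\ A x /\ B x.

Definition continuous_on_unit (g : R -> X) : Prop :=
  forall O, open T O -> forall t, 0 <= t <= 1 -> O (g t) ->
    exists eps, 0 < eps /\
      forall s, 0 <= s <= 1 -> Rabs (s - t) < eps -> O (g s).

Definition joined_by_arc_in (A B S : X -> Prop) : Prop :=
  exists g : R -> X, continuous_on_unit g /\
    (forall t, 0 <= t <= 1 -> S (g t)) /\ A (g 0) /\ B (g 1).

Definition loc_almost_arcwise_connected_at (x : X) : Prop :=
  forall V, nbhd x V -> exists U, nbhd x U /\ subset U V /\
    forall A B, open T A -> open T B -> subset A U -> subset B U ->
      (exists a, A a) -> (exists b, B b) ->
      joined_by_arc_in A B (closure V).

Definition loc_almost_arcwise_connected : Prop :=
  forall x, loc_almost_arcwise_connected_at x.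

Definition locally_connected : Prop :=
  forall x V, open T V -> V x ->
    exists U, open T U /\ U x /\ subset U V /\ connected U.

End Topo.

(* Main.v *)
Require Import Defs.
From Stdlib Require Import Reals Lra Classical FunctionalExtensionality PropExtensionality.
Open Scope R_scope.

Lemma abs_lt (x e : R) : - e < x < e -> Rabs x < e.
Proof. intros; unfold Rabs; destruct (Rcase_abs x); lra. Qed.

Lemma arc_core (X : Type) (T : topology X) (g : R -> X) (A B : X -> Prop) a b :
  continuous_on_unit T g -> open T A -> open T B ->
  (forall t, 0 <= t <= 1 -> A (g t) \/ B (g t)) ->
  0 <= a -> a <= b -> b <= 1 -> A (g a) -> B (g b) ->
  exists t, 0 <= t <= 1 /\ A (g t) /\ B (g t).
Proof.
  intros Hg HA HB Hcov Ha0 Hab Hb1 Aa Bb.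
  set (E := fun t => a <= t <= b /\ forall s, a <= s <= t -> A (g s)).
  assert (Ebd : bound E) by (exists b; intros t [Ht _]; lra).
  assert (Ene : exists t, E t).
  { exists a; split; [lra|]. intros s Hs; replace s with a by lra; auto. }
  destruct (completeness E Ebd Ene) as [c [Hub Hlub]].
  assert (Hac : a <= c) by (apply Hub; destruct Ene as [t Et]; unfold E; split; [lra|];
    intros s Hs; replace s with a by lra; auto).
  assert (Hcb : c <= b) by (apply Hlub; intros t [Ht _]; lra).
  assert (Fact : forall s, a <= s < c -> A (g s)).
  { intros s Hs. destruct (classic (exists t, E t /\ s < t)) as [[t [[Ht Ht2] Hst]]|N].
    - apply Ht2; lra.
    - exfalso. assert (c <= s); [|lra]. apply Hlub. intros t Et.
      apply Rnot_lt_le. intro. apply N; eauto. }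
  destruct (Hcov c ltac:(lra)) as [Ac|Bc].
  - destruct (Req_dec c b) as [->|Hne].
    + exists b; repeat split; auto; lra.
    + destruct (Hg A HA c ltac:(lra) Ac) as [eps [Heps Hc]].
      exfalso.
      set (d := Rmin b (c + eps/2)).
      assert (Hd1 : d <= b) by apply Rmin_l.
      assert (Hd2 : d <= c + eps/2) by apply Rmin_r.
      assert (Hd3 : c < d) by (unfold d, Rmin; destruct Rle_dec; lra).
      assert (E d).
      { split; [lra|]. intros s Hs. destruct (Rlt_dec s c).
        - apply Fact; lra.
        - apply Hc; [lra|]. apply abs_lt; lra. }
      specialize (Hub d H); lra.
  - destruct (classic (A (g c))) as [Ac|nAc].
    + exists c; repeat split; auto; lra.
    + assert (a < c) by (destruct (Req_dec a c) as [<-|]; [contradiction|lra]).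
      destruct (Hg B HB c ltac:(lra) Bc) as [eps [Heps Hc]].
      destruct (Rle_dec (c - eps/2) a).
      * exists a; repeat split; auto; try lra. apply Hc; [lra|]. apply abs_lt; lra.
      * exists (c - eps/2); repeat split; try lra.
        -- apply Fact; lra.
        -- apply Hc; [lra|]. apply abs_lt; lra.
Qed.

Lemma arc_conn (X : Type) (T : topology X) (g : R -> X) (A B : X -> Prop) a b :
  continuous_on_unit T g -> open T A -> open T B ->
  (forall t, 0 <= t <= 1 -> A (g t) \/ B (g t)) ->
  0 <= a <= 1 -> 0 <= b <= 1 -> A (g a) -> B (g b) ->
  exists t, 0 <= t <= 1 /\ A (g t) /\ B (g t).
Proof.
  intros Hg HA HB Hcov Ha Hb Aa Bb.
  destruct (Rle_dec a b).
  - eapply arc_core; eauto; lra.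
  - destruct (@arc_core _ T g B A b a) as [t [Ht [H1 H2]]]; auto; try lra.
    + intros t Ht; destruct (Hcov t Ht); auto.
    + eauto.
Qed.

Lemma conn_union2 (X : Type) (T : topology X) (C1 C2 : X -> Prop) p :
  connected T C1 -> connected T C2 -> C1 p -> C2 p ->
  connected T (fun w => C1 w \/ C2 w).
Proof.
  intros H1 H2 P1 P2 A B HA HB Hcov [a [Ca Aa]] [b [Cb Bb]].
  assert (Hp : A p \/ B p) by (apply Hcov; auto).
  assert (G : forall C, connected T C -> subset C (fun w => C1 w \/ C2 w) -> C p ->
     (exists x, C x /\ A x) -> (exists x, C x /\ B x) ->
     exists x, (C1 x \/ C2 x) /\ A x /\ B x).
  { intros C HC Hs Cp EA EB. destruct (HC A B HA HB) as [x [Cx [Ax Bx]]]; auto.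
    - intros x Cx; apply Hcov, Hs, Cx.
    - exists x; auto. }
  destruct Hp as [Ap|Bp].
  - destruct Cb as [Cb|Cb]; [apply (G C1) | apply (G C2)]; eauto;
      intros x Hx; auto.
  - destruct Ca as [Ca|Ca]; [apply (G C1) | apply (G C2)]; eauto;
      intros x Hx; auto.
Qed.

Lemma open_local (X : Type) (T : topology X) (S : X -> Prop) :
  (forall y, S y -> exists O, open T O /\ O y /\ subset O S) -> open T S.
Proof.
  intros H.
  assert (E : S = fun x => exists A, (open T A /\ subset A S) /\ A x).
  { apply functional_extensionality; intro x; apply propositional_extensionality; split.
    - intros Sx. destruct (H x Sx) as [O [HO [Ox Hs]]]. exists O; auto.
    - intros [A [[_ Hs] Ax]]; auto. }
  rewrite E. apply open_union. intros A [HA _]; auto.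
Qed.

Lemma regular_shrink (X : Type) (T : topology X) (V : X -> Prop) y :
  regular T -> open T V -> V y ->
  exists W, open T W /\ W y /\ subset (closure T W) V.
Proof.
  intros Hr HV Vy.
  assert (Hc : closed T (fun x => ~ V x)).
  { unfold closed. replace (fun x => ~ ~ V x) with V; auto.
    apply functional_extensionality; intro x; apply propositional_extensionality; split.
    - auto. - apply NNPP. }
  destruct (Hr y _ Hc ltac:(auto)) as [U [V' [HU [HV' [Uy [Hs Hd]]]]]].
  exists U; repeat split; auto.
  intros z Hz. apply NNPP; intro nV.
  destruct (Hz V' HV' (Hs z nV)) as [w [V'w Uw]]. eauto.
Qed.

Theorem mainTheorem12 (X : Type) (T : topology X) :
  regular T -> loc_almost_arcwise_connected T -> locally_connected T.
Proof.
  intros Hr Hl x V HV Vx.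
  set (K := fun z => exists C, connected T C /\ subset C V /\ C x /\ C z).
  exists K. repeat split.
  - apply open_local. intros y [Cy [HCy [HCyV [Cyx Cyy]]]].
    destruct (@regular_shrink _ T V y Hr HV) as [W [HW [Wy HWV]]].
    { apply HCyV; auto. }
    destruct (Hl y W) as [U [[O [HO [Oy HOU]]] [HUW Harc]]].
    { exists W; repeat split; auto. }
    set (L := fun w => O w \/ exists g, continuous_on_unit T g /\
       (forall t, 0 <= t <= 1 -> closure T W (g t)) /\ O (g 0) /\ O (g 1) /\
       exists t, 0 <= t <= 1 /\ g t = w).
    assert (LV : subset L V).
    { intros w [Ow|[g [_ [Hg [_ [_ [t [Ht <-]]]]]]]].
      - apply HWV. intros O' _ H'. exists w. split; [exact H'|]. apply HUW, HOU, Ow.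
      - apply HWV, Hg, Ht. }
    assert (arcL : forall g, continuous_on_unit T g ->
       (forall t, 0 <= t <= 1 -> closure T W (g t)) -> O (g 0) -> O (g 1) ->
       forall t, 0 <= t <= 1 -> L (g t)).
    { intros g H1 H2 H3 H4 t Ht. right. exists g; repeat split; eauto. }
    assert (LC : connected T L).
    { intros A B HA HB Hcov [a [La Aa]] [b [Lb Bb]].
      assert (ArcCase : forall g, continuous_on_unit T g ->
         (forall t, 0 <= t <= 1 -> closure T W (g t)) -> O (g 0) -> O (g 1) ->
         forall s s', 0 <= s <= 1 -> 0 <= s' <= 1 -> A (g s) -> B (g s') ->
         exists x, L x /\ A x /\ B x).
      { intros g H1 H2 H3 H4 s s' Hs Hs' As Bs'.
        assert (Hc : forall t1, 0 <= t1 <= 1 -> A (g t1) \/ B (g t1)).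
        { intros t1 Ht1; apply Hcov; eauto. }
        destruct (@arc_conn _ T g A B s s' H1 HA HB Hc Hs Hs' As Bs') as [t0 [Ht0 [At Bt]]].
        exists (g t0); eauto. }
      assert (HyL : L y) by (left; auto).
      destruct (classic (exists w, O w /\ A w)) as [[wa [Owa Awa]]|NA].
      + destruct (classic (exists w, O w /\ B w)) as [[wb [Owb Bwb]]|NB].
        * destruct (Harc (fun w => O w /\ A w) (fun w => O w /\ B w))
            as [g [Hg [Hgin [[O0 A0] [O1 B1]]]]].
          -- apply open_inter; auto.
          -- apply open_inter; auto.
          -- intros w [Ow _]; auto.
          -- intros w [Ow _]; auto.
          -- eauto.
          -- eauto.
          -- apply (ArcCase g Hg Hgin O0 O1 0 1); auto; lra.
        *
          destruct Lb as [Ob|[g [Hg [Hgin [O0 [O1 [t [Ht Hgt]]]]]]]].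
          -- exfalso; eauto.
          -- assert (A (g 0)).
             { destruct (Hcov (g 0)) as [|B0]; [left; auto|auto|exfalso; eauto]. }
             subst b. apply (ArcCase g Hg Hgin O0 O1 0 t); auto; lra.
      + destruct La as [Oa|[g [Hg [Hgin [O0 [O1 [t [Ht Hgt]]]]]]]].
        * exfalso; eauto.
        * assert (B (g 0)).
          { destruct (Hcov (g 0)) as [A0|]; [left; auto|exfalso; eauto|auto]. }
          subst a. apply (ArcCase g Hg Hgin O0 O1 t 0); auto; lra. }
    exists O; repeat split; auto.
    intros z Oz. exists (fun w => Cy w \/ L w). repeat split.
    + apply (@conn_union2 _ T Cy L y); auto. left; auto.
    + intros w [Cw|Lw]; auto.
    + left; auto.
    + right; left; auto.
  - exists (fun w => w = x). repeat split.
    + intros A B _ _ _ [a [-> Aa]] [b [-> Bb]]. exists x; auto.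
    + intros w ->; auto.
  - intros z [C [_ [HCV [_ Cz]]]]; auto.
  - intros A B HA HB Hcov [a [Ka Aa]] [b [[Cb [HCb [HCbV [Cbx Cbb]]]] Bb]].
    assert (Kx : K x) by (exists (fun w => w = x); repeat split;
      [intros A' B' _ _ _ [a' [-> ?]] [b' [-> ?]]; exists x; auto | intros w ->; auto]).
    destruct (Hcov x Kx) as [Ax|Bx].
    + destruct (HCb A B HA HB) as [w [Cw [Aw Bw]]]; eauto.
      * intros w Cw; apply Hcov; exists Cb; auto.
      * exists w; split; auto. exists Cb; auto.
    + destruct Ka as [Ca [HCa [HCaV [Cax Caa]]]].
      destruct (HCa A B HA HB) as [w [Cw [Aw Bw]]]; eauto.
      * intros w Cw; apply Hcov; exists Ca; auto.
      * exists w; split; auto. exists Ca; auto.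
Qed.
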